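(* Let $(X,\widetilde{\tau},\mathfrak{a}_E,E)$ be a soft aura topological space and $(G,E)\in\mathrm{SS}(X,E)$. Then: if $(G,E)$ is soft $\mathfrak{a}$-open it is soft $\mathfrak{a}$-$\alpha$-open; if it is soft $\mathfrak{a}$-$\alpha$-open it is both soft $\mathfrak{a}$-semi-open and soft $\mathfrak{a}$-pre-open; if it is soft $\mathfrak{a}$-semi-open or soft $\mathfrak{a}$-pre-open it is soft $\mathfrak{a}$-$b$-open; and if it is soft $\mathfrak{a}$-$b$-open it is soft $\mathfrak{a}$-$\beta$-open.
   Context: Let $X$ be a nonempty set and $E$ a nonempty parameter set. A soft set over $X$ is a map $F:E\to\mathcal{P}(X)$, written $(F,E)$; $\mathrm{SS}(X,E)$ denotes all soft sets; $\sqsubseteq$, $\sqcup$ are parameterwise inclusion and union. A soft topology $\widetilde{\tau}$ is a subfamily of $\mathrm{SS}(X,E)$ containing the soft sets with all values $\emptyset$ and all values $X$, closed under arbitrary soft unions and finite soft intersections. A soft scope function is a map $\mathfrak{a}_E:X\to\widetilde{\tau}$ with $x\in\mathfrak{a}_E(x)(e)$ for all $x\in X$, $e\in E$; $(X,\widetilde{\tau},\mathfrak{a}_E,E)$ is a soft aura topological space. $\mathrm{cl}_{\mathfrak{a}}(G,E)(e)=\{x:\mathfrak{a}_E(x)(e)\cap G(e)\neq\emptyset\}$, $\mathrm{int}_{\mathfrak{a}}(G,E)(e)=\{x:\mathfrak{a}_E(x)(e)\subseteq G(e)\}$. $(G,E)$ is: soft $\mathfrak{a}$-open if $\mathrm{int}_{\mathfrak{a}}(G,E)=(G,E)$;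 soft $\mathfrak{a}$-semi-open if $(G,E)\sqsubseteq\mathrm{cl}_{\mathfrak{a}}(\mathrm{int}_{\mathfrak{a}}(G,E))$; soft $\mathfrak{a}$-pre-open if $(G,E)\sqsubseteq\mathrm{int}_{\mathfrak{a}}(\mathrm{cl}_{\mathfrak{a}}(G,E))$; soft $\mathfrak{a}$-$\alpha$-open if $(G,E)\sqsubseteq\mathrm{int}_{\mathfrak{a}}(\mathrm{cl}_{\mathfrak{a}}(\mathrm{int}_{\mathfrak{a}}(G,E)))$; soft $\mathfrak{a}$-$\beta$-open if $(G,E)\sqsubseteq\mathrm{cl}_{\mathfrak{a}}(\mathrm{int}_{\mathfrak{a}}(\mathrm{cl}_{\mathfrak{a}}(G,E)))$; soft $\mathfrak{a}$-$b$-open if $(G,E)\sqsubseteq\mathrm{cl}_{\mathfrak{a}}(\mathrm{int}_{\mathfrak{a}}(G,E))\sqcup\mathrm{int}_{\mathfrak{a}}(\mathrm{cl}_{\mathfrak{a}}(G,E))$. *)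

(* Defs.v *)
Set Implicit Arguments.

Definition soft_set (X E : Type) := E -> X -> Prop.

Definition soft_sub {X E : Type} (F G : soft_set X E) : Prop :=
  forall e x, F e x -> G e x.

Definition soft_union {X E : Type} (F G : soft_set X E) : soft_set X E :=
  fun e x => F e x \/ G e x.

Definition soft_inter {X E : Type} (F G : soft_set X E) : soft_set X E :=
  fun e x => F e x /\ G e x.

Definition soft_null {X E : Type} : soft_set X E := fun _ _ => False.
Definition soft_abs {X E : Type} : soft_set X E := fun _ _ => True.

Definition soft_bigunion {X E : Type} (Fam : soft_set X E -> Prop) : soft_set X E :=
  fun e x => exists F, Fam F /\ F e x.

Definition soft_topology {X E : Type} (tau : soft_set X E -> Prop) : Prop :=
  tau soft_null /\ tau soft_abs /\
  (forall Fam : soft_set X E -> Prop,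
      (forall F, Fam F -> tau F) -> tau (soft_bigunion Fam)) /\
  (forall F G, tau F -> tau G -> tau (soft_inter F G)).

Definition soft_scope {X E : Type} (tau : soft_set X E -> Prop)
  (a : X -> soft_set X E) : Prop :=
  (forall x, tau (a x)) /\ (forall x e, a x e x).

Definition cl_a {X E : Type} (a : X -> soft_set X E) (G : soft_set X E) : soft_set X E :=
  fun e x => exists y, a x e y /\ G e y.

Definition int_a {X E : Type} (a : X -> soft_set X E) (G : soft_set X E) : soft_set X E :=
  fun e x => forall y, a x e y -> G e y.

Definition soft_a_open {X E : Type} (a : X -> soft_set X E) (G : soft_set X E) : Prop :=
  int_a a G = G.
Definition soft_a_semi_open {X E : Type} (a : X -> soft_set X E) (G : soft_set X E) : Prop :=
  soft_sub G (cl_a a (int_a a G)).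
Definition soft_a_pre_open {X E : Type} (a : X -> soft_set X E) (G : soft_set X E) : Prop :=
  soft_sub G (int_a a (cl_a a G)).
Definition soft_a_alpha_open {X E : Type} (a : X -> soft_set X E) (G : soft_set X E) : Prop :=
  soft_sub G (int_a a (cl_a a (int_a a G))).
Definition soft_a_beta_open {X E : Type} (a : X -> soft_set X E) (G : soft_set X E) : Prop :=
  soft_sub G (cl_a a (int_a a (cl_a a G))).
Definition soft_a_b_open {X E : Type} (a : X -> soft_set X E) (G : soft_set X E) : Prop :=
  soft_sub G (soft_union (cl_a a (int_a a G)) (int_a a (cl_a a G))).

(* Main.v *)
Require Import Defs.

Theorem theorem4p2 (X E : Type) (x0 : X) (e0 : E)
  (tau : soft_set X E -> Prop) (a : X -> soft_set X E)
  (Htau : soft_topology tau) (Ha : soft_scope tau a) (G : soft_set X E) :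
  (soft_a_open a G -> soft_a_alpha_open a G) /\
  (soft_a_alpha_open a G -> soft_a_semi_open a G /\ soft_a_pre_open a G) /\
  (soft_a_semi_open a G \/ soft_a_pre_open a G -> soft_a_b_open a G) /\
  (soft_a_b_open a G -> soft_a_beta_open a G).
Proof.
  destruct Ha as [_ Hr].
  unfold soft_a_open, soft_a_alpha_open, soft_a_semi_open, soft_a_pre_open,
    soft_a_b_open, soft_a_beta_open, soft_sub, soft_union, cl_a, int_a.
  split; [|split; [|split]].
  - intros H e x Hx y Hy. exists y. split; [apply Hr|].
    assert (K : forall e' x', (forall y', a x' e' y' -> G e' y') = G e' x')
      by (intros e' x'; exact (f_equal (fun F => F e' x') H)).
    rewrite K. rewrite <- K in Hx. apply Hx; exact Hy.
  - intros H. split.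
    + intros e x Hx. exact (H e x Hx x (Hr x e)).
    + intros e x Hx y Hy. destruct (H e x Hx y Hy) as [z [Hz1 Hz2]].
      exists z. split; [exact Hz1|]. apply Hz2. apply Hr.
  - intros [H|H] e x Hx.
    + left. exact (H e x Hx).
    + right. exact (H e x Hx).
  - intros H e x Hx. destruct (H e x Hx) as [[z [Hz1 Hz2]]|H2].
    + exists z. split; [exact Hz1|]. intros w Hw. exists w. split; [apply Hr|].
      apply Hz2; exact Hw.
    + exists x. split; [apply Hr|exact H2].
Qed.
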